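(* Let $U\subseteq\mathbb{R}^n$ be an open set with finite Lebesgue measure and let $f:U\times\mathbb{R}^m\to\mathbb{R}$ be a normal integrand bounded from below. Let $(u_k)$ be a sequence uniformly bounded in $L^\infty(U;\mathbb{R}^m)$ generating a Young measure $\nu=\{\nu_x\}_{x\in U}$. Then $$\liminf_{k\to\infty}\operatorname*{ess\,sup}_{x\in U}f(x,u_k(x))\ge\operatorname*{ess\,sup}_{x\in U}\bar f(x),\qquad\bar f(x):=\nu_x\text{-}\operatorname*{ess\,sup}_{\xi\in\mathbb{R}^m}f(x,\xi).$$
   Context: A normal integrand is a $\mathcal{L}^n\otimes\mathcal{B}$-measurable $f:U\times\mathbb{R}^m\to\mathbb{R}$ with $f(x,\cdot)$ lower semicontinuous for a.e. $x$. A family $\{\nu_x\}_{x\in U}$ of Borel probability measures on $\mathbb{R}^m$ is the Young measure generated by a bounded sequence $(u_k)$ in $L^\infty$ if it is weakly* measurable, the $\nu_x$ are supported in a common compact set, and for every Carathéodory $g$ with $(g(\cdot,u_k))$ bounded and equi-integrable in $L^1$, $g(\cdot,u_k)\rightharpoonup\int g(\cdot,\xi)\,d\nu_{(\cdot)}(\xi)$ weakly in $L^1$. $\nu_x\text{-}\operatorname{ess\,sup}$ denotes the essential supremum with respect to $\nu_x$. *)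

(* Defs.v *)
From HB Require Import structures.
From mathcomp Require Import all_boot all_order all_algebra.
From mathcomp Require Import all_classical all_reals all_analysis measurable_realfun.

Set Implicit Arguments.
Unset Strict Implicit.
Unset Printing Implicit Defensive.

Import Order.TTheory GRing.Theory Num.Theory.
Import numFieldNormedType.Exports.

Local Open Scope classical_set_scope.
Local Open Scope ring_scope.

(* R^n is modelled as [n.-tuple R], with the library's product
   sigma-algebra, i.e. the Borel sigma-algebra of R^n. *)

Section young.
Variable R : realType.

(** sup-norm closeness of two points of R^n (generates the Euclidean
    topology of R^n) *)
Definition tclose (n : nat) (x y : n.-tuple R) (e : R) : Prop :=
  forall i : 'I_n, `|tnth x i - tnth y i| < e.

Definition topen (n : nat) (U : set (n.-tuple R)) : Prop :=
  forall x, U x -> exists2 e : R, 0 < e & forall y, tclose x y e -> U y.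

Definition tcontinuous (m : nat) (F : m.-tuple R -> R) : Prop :=
  forall xi (e : R), 0 < e ->
    exists2 d : R, 0 < d & forall eta, tclose xi eta d -> `|F eta - F xi| < e.

Definition tlsc (m : nat) (F : m.-tuple R -> R) : Prop :=
  forall xi (a : R), a < F xi ->
    exists2 d : R, 0 < d & forall eta, tclose xi eta d -> a < F eta.

(** [mu] is the Lebesgue measure on (the Borel sets of) R^n: it gives
    every box its volume (this characterizes it uniquely). *)
Definition is_lebesgue (n : nat) (mu : {measure set (n.-tuple R) -> \bar R}) :=
  forall a b : n.-tuple R, (forall i, tnth a i <= tnth b i) ->
    mu [set x | forall i, tnth a i < tnth x i <= tnth b i] =
    (\prod_(i < n) (tnth b i - tnth a i))%:E.

Section with_mu.
Variables (n : nat) (mu : {measure set (n.-tuple R) -> \bar R}).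

(** Lebesgue measurable sets = completion of the Borel sets w.r.t. mu *)
Definition lmeasurable (A : set (n.-tuple R)) : Prop :=
  exists B N, [/\ measurable B, measurable N, mu N = 0%E &
                  (A `\` B) `|` (B `\` A) `<=` N].

Definition lmeas_fun d' (T' : measurableType d') (U : set (n.-tuple R))
    (h : n.-tuple R -> T') : Prop :=
  forall B, measurable B -> lmeasurable (U `&` h @^-1` B).

Definition ess_sup_on (U : set (n.-tuple R)) (F : n.-tuple R -> \bar R) : \bar R :=
  ereal_inf [set y | \forall x \ae mu, U x -> (F x <= y)%E].

Variable m : nat.

Definition LxB : set (set (n.-tuple R * m.-tuple R)) :=
  <<s [set C | exists A B, [/\ lmeasurable A, measurable B & C = A `*` B]] >>.

Variable U : set (n.-tuple R).

Definition normal_integrand (f : n.-tuple R -> m.-tuple R -> R) : Prop :=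
  (forall B : set R, measurable B -> LxB [set p | U p.1 /\ B (f p.1 p.2)]) /\
  (\forall x \ae mu, U x -> tlsc (f x)).

Definition caratheodory (g : n.-tuple R -> m.-tuple R -> R) : Prop :=
  (forall xi, lmeas_fun U (fun x => g x xi)) /\
  (\forall x \ae mu, U x -> tcontinuous (g x)).

Definition C0 (phi : m.-tuple R -> R) : Prop :=
  tcontinuous phi /\
  forall e : R, 0 < e -> exists r : R, forall xi,
    (exists i, r < `|tnth xi i|) -> `|phi xi| < e.

Definition Linf_bounded (u : nat -> n.-tuple R -> m.-tuple R) : Prop :=
  (forall k, lmeas_fun U (u k)) /\
  exists C : R, forall k, \forall x \ae mu, U x -> forall i, `|tnth (u k x) i| <= C.

Definition L1_bounded (G : nat -> n.-tuple R -> R) : Prop :=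
  (forall k, lmeas_fun U (G k)) /\
  exists C : R, forall k, (\int[mu]_(x in U) `|G k x|%:E <= C%:E)%E.

Definition equi_integrable (G : nat -> n.-tuple R -> R) : Prop :=
  forall e : R, 0 < e -> exists2 d : R, 0 < d &
    forall E, measurable E -> E `<=` U -> (mu E < d%:E)%E ->
      forall k, (\int[mu]_(x in E) `|G k x|%:E < e%:E)%E.

Definition weak_L1_cvg (G : nat -> n.-tuple R -> R) (Ginf : n.-tuple R -> \bar R) :=
  lmeas_fun U Ginf /\ (\int[mu]_(x in U) `|Ginf x| < +oo)%E /\
  forall h : n.-tuple R -> R, lmeas_fun U h ->
    (exists C : R, \forall x \ae mu, U x -> `|h x| <= C) ->
    (fun k => \int[mu]_(x in U) ((G k x)%:E * (h x)%:E))%E @ \oo -->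
    (\int[mu]_(x in U) (Ginf x * (h x)%:E))%E.

Definition generates_young (u : nat -> n.-tuple R -> m.-tuple R)
    (nu : n.-tuple R -> probability (m.-tuple R) R) : Prop :=
  [/\ (forall phi, C0 phi -> lmeas_fun U (fun x => \int[nu x]_xi (phi xi)%:E)%E),
      (exists C : R, forall x, U x -> nu x [set xi | exists i, C < `|tnth xi i|] = 0%E) &
      (forall g, caratheodory g ->
        L1_bounded (fun k x => g x (u k x)) ->
        equi_integrable (fun k x => g x (u k x)) ->
        weak_L1_cvg (fun k x => g x (u k x)) (fun x => \int[nu x]_xi (g x xi)%:E)%E)].

End with_mu.

Definition nu_ess_sup (m : nat) (P : probability (m.-tuple R) R)
    (F : m.-tuple R -> R) : \bar R :=
  ereal_inf [set y | \forall xi \ae P, ((F xi)%:E <= y)%E].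

End young.

(* Main.v *)
Require Import Defs.
From HB Require Import structures.
From mathcomp Require Import all_boot all_order all_algebra.
From mathcomp Require Import all_classical all_reals all_analysis measurable_realfun.
From mathcomp Require Import ring lra.
Import Order.TTheory GRing.Theory Num.Theory.
Local Open Scope classical_set_scope.
Local Open Scope ring_scope.
Set Implicit Arguments.
Unset Strict Implicit.
Unset Printing Implicit Defensive.

Section aux.
Context d (T : measurableType d) (R : realType) (mu : {measure set T -> \bar R}).
Local Open Scope ereal_scope.

Lemma nn_mono D1 D2 (F1 F2 : T -> \bar R) :
  (forall x, D1 x -> 0 <= F1 x) -> (forall x, D2 x -> 0 <= F2 x) ->
  (forall x, (F1 \_ D1) x <= (F2 \_ D2) x) ->
  \int[mu]_(x in D1) F1 x <= \int[mu]_(x in D2) F2 x.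
Proof.
move=> h1 h2 h12; rewrite !ge0_integralE//.
apply: ereal_sup_le => _ [h hF <-]; exists h => //= x; exact: le_trans (hF x) (h12 x).
Qed.

Lemma int0_negl D (F : T -> \bar R) :
  (forall x, D x -> 0 <= F x) -> \int[mu]_(x in D) F x = 0 ->
  (forall j : nat, exists B, [/\ measurable B,
       B `<=` D `&` [set x | (j.+1%:R^-1)%:E < F x] &
       mu.-negligible (D `&` [set x | (j.+1%:R^-1)%:E < F x] `\` B)]) ->
  mu.-negligible (D `&` [set x | F x != 0]).
Proof.
move=> F0 I0 hB.
have hj : forall j, mu.-negligible (D `&` [set x | (j.+1%:R^-1)%:E < F x]).
  move=> j; have [B [mB BD nB]] := hB j.
  have muB : mu B = 0.
    apply/eqP; rewrite eq_le measure_ge0 andbT.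
    have c0 : (0 < j.+1%:R^-1 :> R)%R by rewrite invr_gt0.
    rewrite -(@lee_pmul2l _ (j.+1%:R^-1)%:E) ?lte_fin// mule0 -integral_cst//.
    rewrite -I0; apply: nn_mono => //.
      by move=> x _; rewrite lee_fin ltW.
    move=> x; rewrite /patch; case: ifPn => [/[1!inE] Bx|_].
      by have [Dx /ltW] := BD _ Bx; rewrite ifT ?inE.
    by case: ifPn => // /[1!inE] /F0.
  apply: negligibleS (negligibleU (proj2 (negligibleP _ mB) muB) nB).
  move=> x Ax; have [Bx|nBx] := pselect (B x); [by left|by right].
apply: negligibleS (negligible_bigcup hj).
move=> x [Dx Fx]; have Fx0 : 0 < F x by rewrite lt0e Fx F0.
case E: (F x) Fx0 => [r||]; rewrite ?lte_fin => r0.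
- have [k hk] := ltr_add_invr r0; exists k => //; split => //=.
  by rewrite E lte_fin; rewrite add0r in hk.
- by exists 0%N => //; split => //=; rewrite E ltry.
- by [].
Qed.
End aux.
Section lm.
Variables (R : realType) (n : nat) (mu : {measure set (n.-tuple R) -> \bar R}).

Definition lmT of {measure set (n.-tuple R) -> \bar R} : Type := n.-tuple R.
HB.instance Definition _ := Choice.copy (lmT mu) (n.-tuple R).
HB.instance Definition _ := isPointed.Build (lmT mu) (nseq_tuple n (0:R)).

Lemma lm0 : lmeasurable mu (set0 : set (lmT mu)).
Proof.
exists set0, set0; split; [exact: measurable0|exact: measurable0|exact: measure0|].
by rewrite set0D setU0.
Qed.

Lemma lmC (A : set (lmT mu)) : lmeasurable mu A -> lmeasurable mu (~` A).
Proof.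
move=> [B [N [mB mN N0 sub]]]; exists (~` B), N; split => //.
  exact: measurableC.
move=> x [[/= nAx nBx]|[/= nBx nAx]]; apply: sub.
  by right; split => //; apply: contra_notP nBx.
by left; split => //; apply: contra_notP nAx.
Qed.

Lemma lmU (F : (set (lmT mu))^nat) : (forall i, lmeasurable mu (F i)) ->
  lmeasurable mu (\bigcup_i F i).
Proof.
move=> hF; have /(_ _)/cid hF' := hF.
exists (\bigcup_i sval (hF' i)), (\bigcup_i sval (cid (svalP (hF' i)))).
split.
- by apply: bigcupT_measurable => i; case: (svalP (cid (svalP (hF' i)))).
- by apply: bigcupT_measurable => i; case: (svalP (cid (svalP (hF' i)))).
- apply/(negligibleP _ _).1.
    by apply: bigcupT_measurable => i; case: (svalP (cid (svalP (hF' i)))).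
  apply: negligible_bigcup => i; apply/negligibleP;
    by case: (svalP (cid (svalP (hF' i)))).
- move=> x [[[i _ Fix] nB]|[[i _ Bix] nF]].
    exists i => //; case: (svalP (cid (svalP (hF' i)))) => _ _ _; apply.
    by left; split => // Bix; apply: nB; exists i.
  exists i => //; case: (svalP (cid (svalP (hF' i)))) => _ _ _; apply.
  by right; split => // Fix; apply: nF; exists i.
Qed.

HB.instance Definition _ := @isMeasurable.Build default_measure_display (lmT mu)
  (lmeasurable mu) lm0 lmC lmU.

Lemma lmeas_funP (U : set (n.-tuple R)) d' (T' : measurableType d') (h : n.-tuple R -> T') :
  lmeasurable mu U -> lmeas_fun mu U h <-> measurable_fun (U : set (lmT mu)) (h : lmT mu -> T').
Proof.
move=> mU; split; first by move=> H _ B mB; exact: H.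
by move=> H B mB; exact: H.
Qed.

Lemma lm_meas (A : set (n.-tuple R)) : measurable A -> lmeasurable mu A.
Proof.
move=> mA; exists A, set0; split; [exact: mA|exact: measurable0|exact: measure0|].
by rewrite !setDv setU0.
Qed.

End lm.
Section dist.
Variables (R : realType) (m : nat).
Implicit Types a b c : m.-tuple R.

Definition tdist a b : R := \big[Num.max/0]_(i < m) `|tnth a i - tnth b i|.

Lemma tdist_ge0 a b : 0 <= tdist a b.
Proof. by rewrite /tdist; elim/big_ind: _ => // x y; rewrite le_max => ->. Qed.

Lemma tdist_le a b i : `|tnth a i - tnth b i| <= tdist a b.
Proof.
rewrite /tdist (bigD1 i)//= le_max lexx//.
Qed.

Lemma tdist_lt a b e : 0 < e -> (tdist a b < e <-> tclose a b e).
Proof.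
move=> e0; split => [h i|h]; first exact: le_lt_trans (tdist_le a b i) h.
exact: bigmax_lt.
Qed.

Lemma tdist_tri a b c : tdist a c <= tdist a b + tdist b c.
Proof.
apply: bigmax_le => [|i _]; first by rewrite addr_ge0 ?tdist_ge0.
rewrite (le_trans _ (lerD (tdist_le a b i) (tdist_le b c i)))//.
by rewrite (le_trans _ (ler_normD _ _))// addrA subrK.
Qed.

Lemma tdist_sym a b : tdist a b = tdist b a.
Proof. by apply: eq_bigr => i _; rewrite distrC. Qed.

Lemma tdistxx a : tdist a a = 0.
Proof. by apply/eqP; rewrite eq_le tdist_ge0 andbT; apply: bigmax_le => // i _; rewrite subrr normr0. Qed.

Lemma measurable_tdist d (T : measurableType d) (D : set T) (f g : T -> m.-tuple R) :
  measurable_fun D f -> measurable_fun D g ->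
  measurable_fun D (fun x => tdist (f x) (g x)).
Proof.
move=> mf mg; rewrite /tdist.
have mi i : measurable_fun D (fun x => `|tnth (f x) i - tnth (g x) i|).
  apply: measurableT_comp; first exact: normr_measurable.
  apply: measurable_funB.
    exact: (measurableT_comp (measurable_tnth i) mf).
  exact: (measurableT_comp (measurable_tnth i) mg).
elim: (index_enum _) => [|i s ih].
  by under eq_fun do rewrite big_nil; exact: measurable_cst.
by under eq_fun do rewrite big_cons; exact: measurable_maxr.
Qed.

End dist.

Section openmeas.
Variables (R : realType) (n : nat).

Lemma measurable_ball (q : n.-tuple R) (r : R) :
  measurable [set x : n.-tuple R | tdist x q < r].
Proof.
have mt : measurable_fun setT (fun x : n.-tuple R => tdist x q).
  apply: measurable_tdist => //; exact: measurable_cst.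
rewrite (_ : [set x | _] = setT `&` ((fun x => tdist x q) @^-1` `]-oo, r[)).
  by apply: mt => //; exact: measurable_itv.
by apply/seteqP; split => x /=; rewrite in_itv/= => //; case.
Qed.

Lemma topen_measurable (U : set (n.-tuple R)) : topen U -> measurable U.
Proof.
move=> oU.
pose S (k : nat) : set (n.-tuple R) :=
  match unpickle k with
  | Some (q, r) => let B := [set x | tdist x (map_tuple (@ratr R) q) < ratr r] in
       if `[< B `<=` U >] then B else set0
  | None => set0 end.
have -> : U = \bigcup_k S k.
  apply/seteqP; split => [x Ux|x [k _]]; last first.
    rewrite /S; case: (unpickle k) => [[q r]|//].
    by case: ifPn => // /asboolP; apply.
  have [e e0 he] := oU x Ux.
  have e40 : 0 < e / 4 by rewrite divr_gt0.
  have hq i : exists q : rat, ratr q \in `](tnth x i - e / 4), (tnth x i + e / 4)[.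
    by apply: rat_in_itvoo; rewrite ltrBlDr -addrA ltrDl addr_gt0.
  have [r hr] : exists r : rat, ratr r \in `](e / 4), (e / 2)[.
    apply: rat_in_itvoo; rewrite ltr_pM2l// ltf_pV2 ?posrE//; lra.
  pose q := [tuple xchoose (hq i) | i < n].
  pose Q := map_tuple (@ratr R) q.
  have xQ : tdist x Q < e / 4.
    apply/tdist_lt => // i; rewrite /Q tnth_map tnth_mktuple.
    have := xchooseP (hq i); rewrite in_itv/= => /andP[h1 h2].
    rewrite ltr_norml; apply/andP; split; lra.
  move: hr; rewrite in_itv/= => /andP[r1 r2].
  exists (pickle (q, r)) => //; rewrite /S pickleK.
  have sub : [set y | tdist y Q < ratr r] `<=` U.
    move=> y /= yQ; apply: he; apply/tdist_lt => //.
    rewrite tdist_sym; apply: (le_lt_trans (tdist_tri y Q x)).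
    have xQ' : tdist Q x < e / 4 by rewrite tdist_sym.
    apply: (lt_le_trans (ltrD (lt_trans yQ r2) xQ')); lra.
  case: ifPn => [_|/asboolP //]; rewrite /=.
  exact: (lt_trans xQ).
apply: bigcupT_measurable => k; rewrite /S.
case: (unpickle k) => [[q r]|//]; case: ifPn => // _.
exact: measurable_ball.
Qed.

End openmeas.

Section infs01.
Variable R : realType.
Variable v : nat -> R.
Hypothesis hv : forall k, 0 <= v k <= 1.

Let E := [set v k | k in [set k | (0 <= k)%N]].
Let En : E !=set0. Proof. by exists (v 0%N); exists 0%N. Qed.
Let Elb : has_lbound E. Proof. by exists 0 => _ [k _ <-]; case/andP: (hv k). Qed.

Lemma infs_ge0 : 0 <= infs v 0.
Proof. by apply: lb_le_inf => // _ [k _ <-]; case/andP: (hv k). Qed.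

Lemma infs_le k : infs v 0 <= v k.
Proof. by apply: ge_inf => //; exists k. Qed.

Lemma infs_lt a : infs v 0 < a -> exists k, v k < a.
Proof. by move=> /(inf_lt En) [_ [k _ <-] h]; exists k. Qed.
End infs01.

Lemma min1_lip (R : realType) (a b e : R) : 0 <= e -> a <= e + b ->
  Num.min 1 a <= Num.min 1 b + e.
Proof.
move=> e0 ab; rewrite /Num.min; case: ifPn; case: ifPn; rewrite -?leNgt; lra.
Qed.

Theorem mainTheorem18 (R : realType) (n m : nat)
    (mu : {measure set (n.-tuple R) -> \bar R})
    (U : set (n.-tuple R))
    (f : n.-tuple R -> m.-tuple R -> R)
    (u : nat -> n.-tuple R -> m.-tuple R)
    (nu : n.-tuple R -> probability (m.-tuple R) R) :
  is_lebesgue mu ->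
  topen U ->
  (mu U < +oo)%E ->
  normal_integrand mu U f ->
  (exists c : R, forall x xi, U x -> c <= f x xi) ->
  Linf_bounded mu U u ->
  generates_young mu U u nu ->
  (ess_sup_on mu U (fun x => nu_ess_sup (nu x) (f x))
   <= limn_einf (fun k => ess_sup_on mu U (fun x => (f x (u k x))%:E)))%E.
Proof.
move=> _ hopen hfin [_ flsc] _ [umeas _] [_ _ y3].
have mU : measurable U := topen_measurable hopen.
have lmU : lmeasurable mu U := lm_meas mu mU.
pose s k := ess_sup_on mu U (fun x => (f x (u k x))%:E).
rewrite -/s.
set X := ess_sup_on _ _ _.
suff H : forall t : R, (limn_einf s < t%:E)%E -> (X <= t%:E)%E.
  move: H; set L := limn_einf s; clearbody X L.
  case: L => [l| |] H; last first.
  - case: X H => [x| |] H //.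
      by have := H (x - 1) (ltNyr _); rewrite lee_fin => h; exfalso; clear -h; lra.
    by have := H 0 (ltNyr _); rewrite leNgt ltry.
  - by rewrite leey.
  - case: X H => [x| |] H //.
      rewrite lee_fin; apply/ler_addgt0Pr => e e0; rewrite -lee_fin; apply: H.
      by rewrite lte_fin; lra.
    by have := H (l + 1) ltac:(rewrite lte_fin; clear H; lra); rewrite leNgt ltry.
    by rewrite leNye.
move=> t Lt.
pose Jp k := (s k < t%:E)%E.
have Jinf : forall N, exists2 k, (N <= k)%N & Jp k.
  move=> N.
  have : (einfs s N < t%:E)%E.
    apply: le_lt_trans Lt.
    rewrite limn_einf_lim (cvg_lim (@ereal_hausdorff R) (@cvg_einfs_sup R s)).
    by apply: ereal_sup_ubound; exists N.
  by rewrite /einfs /= => /ereal_inf_lt [_ [k Nk <-] sk]; exists k.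
pose h k x (xi : m.-tuple R) : R :=
  if Jp k then Num.min 1 (tdist xi (u k x)) else 1.
have h01 k x xi : 0 <= h k x xi <= 1.
  rewrite /h; case: (Jp k); last by rewrite ler01 lexx.
  by rewrite ge_min lexx le_min ler01 tdist_ge0.
pose g x xi := infs (fun k => h k x xi) 0.
have g0 x xi : 0 <= g x xi := infs_ge0 (fun k => h01 k x xi).
have gle x xi k : g x xi <= h k x xi := infs_le (fun k => h01 k x xi) k.
have glt x xi a : g x xi < a -> exists k, h k x xi < a.
  exact: (@infs_lt R (fun k => h k x xi) a).
have gJ k x : Jp k -> g x (u k x) = 0.
  move=> Jk; apply/eqP; rewrite eq_le g0 andbT (le_trans (gle _ _ k))//.
  by rewrite /h Jk tdistxx ge_min lexx orbT.
have hlip k x a b : h k x a <= h k x b + tdist a b.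
  rewrite /h; case: (Jp k); last by rewrite lerDl tdist_ge0.
  apply: min1_lip; first exact: tdist_ge0.
  by rewrite (le_trans (tdist_tri a b _)).
have glip x a b : g x a <= g x b + tdist a b.
  rewrite -lerBlDr /g /infs /=; apply: lb_le_inf.
    by exists (h 0%N x b); exists 0%N.
  move=> _ [k _ <-]; rewrite lerBlDr.
  exact: le_trans (gle x a k) (hlip k x a b).
have gcont x : tcontinuous (g x).
  move=> xi e e0; exists e => // eta /(tdist_lt _ _ e0) hd.
  apply: le_lt_trans hd.
  have := glip x eta xi; have := glip x xi eta; rewrite (tdist_sym eta) => h1 h2.
  rewrite ler_norml; apply/andP; split; lra.
have mux k : measurable_fun (U : set (lmT mu)) (u k) := (lmeas_funP _ lmU).1 (umeas k).
have hlb (T : Type) (F : nat -> T -> R) : (forall k x, 0 <= F k x) ->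
    forall x, has_lbound (range (F ^~ x)).
  by move=> F0 x; exists 0 => _ [k _ <-]; exact: F0.
have gxm xi : lmeas_fun mu U (fun x => g x xi).
  apply/(lmeas_funP _ lmU).
  rewrite /g; apply: (measurable_fun_infs (h := fun k (x : lmT mu) => h k x xi)).
    by move=> x _; exists 0 => _ [k _ <-]; case/andP: (h01 k x xi).
  move=> k; rewrite /h; case: (Jp k); last exact: measurable_cst.
  apply: measurable_minr; first exact: measurable_cst.
  by apply: measurable_tdist => //; exact: measurable_cst.
have GKm k : lmeas_fun mu U (fun x => g x (u k x)).
  apply/(lmeas_funP _ lmU).
  rewrite /g; apply: (measurable_fun_infs (h := fun j (x : lmT mu) => h j x (u k x))).
    by move=> x _; exists 0 => _ [j _ <-]; case/andP: (h01 j x (u k x)).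
  move=> j; rewrite /h; case: (Jp j); last exact: measurable_cst.
  apply: measurable_minr; first exact: measurable_cst.
  exact: measurable_tdist.
have gxim x : measurable_fun [set: m.-tuple R] (g x).
  rewrite /g; apply: (measurable_fun_infs (h := fun k xi => h k x xi)).
    by move=> xi _; exists 0 => _ [k _ <-]; case/andP: (h01 k x xi).
  move=> k; rewrite /h; case: (Jp k); last exact: measurable_cst.
  apply: measurable_minr; first exact: measurable_cst.
  by apply: measurable_tdist => //; exact: measurable_cst.
have Gle1 k x : `|g x (u k x)| <= 1.
  by rewrite ger0_norm ?g0 // (le_trans (gle _ _ k)) //; case/andP: (h01 k x (u k x)).
have muUfin : mu U \is a fin_num by rewrite ge0_fin_numE// measure_ge0.
have hcar : caratheodory mu U g.
  split => //; exists set0; split; [exact: measurable0|exact: measure0|].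
  by move=> x /= hx; apply: hx => _; exact: gcont.
have hL1 : L1_bounded mu U (fun k x => g x (u k x)).
  split => //; exists (fine (mu U)) => k.
  rewrite fineK//; apply: (le_trans (@nn_mono _ _ R mu U U _ (cst 1%E) _ _ _)).
  - by move=> x _; rewrite lee_fin.
  - by move=> x _; rewrite lee_fin.
  - by move=> x; rewrite /patch; case: ifPn => // _; rewrite lee_fin.
  - by rewrite integral_cst// mul1e.
have hei : equi_integrable mu U (fun k x => g x (u k x)).
  move=> e e0; exists e => // E mE EU muE k.
  apply: le_lt_trans muE.
  apply: (le_trans (@nn_mono _ _ R mu E E _ (cst 1%E) _ _ _)).
  - by move=> x _; rewrite lee_fin.
  - by move=> x _; rewrite lee_fin.
  - by move=> x; rewrite /patch; case: ifPn => // _; rewrite lee_fin.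
  - by rewrite integral_cst// mul1e.
have [mG [_ hw]] := y3 g hcar hL1 hei.
have lm1 : lmeas_fun mu U (cst 1 : n.-tuple R -> R).
  by apply/(lmeas_funP _ lmU); exact: measurable_cst.
have hb1 : exists C : R, \forall x \ae mu, U x -> `|(cst 1 : n.-tuple R -> R) x| <= C.
  exists 1; exists set0; split; [exact: measurable0|exact: measure0|].
  by move=> x /= hx; apply: hx => _; rewrite normr1.
have cv := hw (cst 1) lm1 hb1.
pose Gi x := (\int[nu x]_xi (g x xi)%:E)%E.
have Gi0 x : (0 <= Gi x)%E.
  by apply: integral_ge0 => xi _; rewrite lee_fin.
have I0 : (\int[mu]_(x in U) Gi x = 0)%E.
  have l0 : (\int[mu]_(x in U) (Gi x * 1%:E) = 0)%E.
    apply: (@ereal_hausdorff R) => A B hA hB.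
    have [N _ hN] := cv A hA.
    have [k Nk Jk] := Jinf N.
    exists 0%E; split; last exact: nbhs_singleton hB.
    have := hN k Nk; rewrite /= integral0_eq// => x Ux.
    by rewrite gJ// mul0e.
  by rewrite -l0; apply: eq_integral => x _; rewrite mule1.
have ZG : mu.-negligible (U `&` [set x | Gi x != 0%E]).
  apply: int0_negl => //.
  move=> j; set c := j.+1%:R^-1.
  have [B0 [N0 [mB0 mN0 N00 sub]]] := mG `]c%:E, +oo%E]%classic (emeasurable_itv _).
  have eqA : U `&` Gi @^-1` `]c%:E, +oo%E]%classic = U `&` [set x | (c%:E < Gi x)%E].
    apply/seteqP; split => x [Ux hx]; split => //=.
      by move: hx; rewrite /= in_itv/= => /andP[].
    by rewrite /= in_itv/= hx leey.
  rewrite eqA in sub.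
  exists (B0 `\` N0); split.
  - exact: measurableD.
  - move=> x [B0x nN0x]; apply: contra_notP nN0x => nA; apply: sub; right.
    by split.
  - exists N0; split => // x [Ax nB].
    have [//|nN] := pselect (N0 x).
    by apply: sub; left; split => // B0x; apply: nB; split.
have ZJ : mu.-negligible (\bigcup_k [set x | Jp k /\ U x /\ (t < f x (u k x))]).
  apply: negligible_bigcup => k.
  case Jk: (Jp k); last first.
    by apply: negligibleS (negligible_set0 _) => x [Jk0 _]; move: Jk; rewrite /Jp Jk0.
  move: Jk; rewrite /Jp /s /ess_sup_on => /ereal_inf_lt [y hy yt].
  apply: negligibleS hy => x [_ [Ux fx]] /= H.
  have := H Ux; move/le_lt_trans/(_ yt); rewrite lte_fin => ft.
  by move: fx; rewrite ltNge (ltW ft).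
rewrite /X /ess_sup_on; apply: ereal_inf_lbound => /=.
apply: negligibleS (negligibleU (negligibleU flsc ZJ) ZG).
move=> x /= nx; apply: contrapT => nU; apply: nx => Ux.
have tl : tlsc (f x).
  by apply: contrapT => ntl; apply: nU; left; left => /= /(_ Ux).
have fk k : Jp k -> f x (u k x) <= t.
  move=> Jk; rewrite leNgt; apply/negP => ft; apply: nU; left; right.
  by exists k.
have Gx : Gi x = 0%E.
  apply/eqP; apply: contrapT => nG; apply: nU; right; split => //.
  exact/negP.
apply: ereal_inf_lbound => /=.
have Zx : (nu x).-negligible (setT `&` [set xi | (g x xi)%:E != 0%E]).
  apply: (int0_negl (mu := nu x) (D := setT) (F := fun xi => (g x xi)%:E)).
  - by move=> xi _; rewrite lee_fin.
  - exact: Gx.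
  - move=> j; exists (setT `&` [set xi | ((j.+1%:R^-1)%:E < (g x xi)%:E)%E]); split.
    + rewrite (_ : _ `&` _ = setT `&` g x @^-1` `]j.+1%:R^-1, +oo[).
        by apply: gxim => //; exact: measurable_itv.
      by apply/seteqP; split => xi /= [_ hh]; split => //; move: hh;
        rewrite in_itv/= ?lte_fin ?andbT.
    + by [].
    + by rewrite setDv; exact: negligible_set0.
apply: negligibleS Zx => xi /= hxi; split => //.
apply/negP => /eqP [g00].
have ft : t < f x xi by rewrite ltNge -lee_fin; apply/negP.
have [d d0 hd] := tl xi t ft.
have := glt x xi (Num.min d 1); rewrite g00 lt_min d0 ltr01 => /(_ isT) [k].
rewrite /h; case Jk: (Jp k); last by rewrite lt_min ltxx andbF.
rewrite lt_min !gt_min ltxx /= => /andP[h1 h2].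
have hT : tdist xi (u k x) < d.
  by case/orP: h1 => // h1; apply: lt_trans h2 h1.
have := hd (u k x) ((tdist_lt _ _ d0).1 hT).
by rewrite ltNge fk.
Qed.
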